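(* In Mahi-Mahi with wave length $w=4$: for every round $r$, there exists a block $b$ of round $r$ that has at least $2f+1$ certificates in round $r+3$.
   Context: There are $n=3f+1$ validators, at most $f$ Byzantine; every honest validator creates exactly one block in every round. Every valid block of round $r$ has as parents at least $2f+1$ blocks of round $r-1$ from distinct validators. A block $b$ of round $r'$ is a vote for a block $L$ of round $r<r'$ with author $a$ if the first block with author $a$ and round $r$ encountered in the deterministic depth-first search from $b$ along parent references is $L$. With wave length $4$, a block $c$ of round $r+3$ is a certificate for a block $L$ of round $r$ if at least $2f+1$ of $c$'s parents (blocks of round $r+2$) are votes for $L$. *)

(* Defs.v *)
From mathcomp Require Import all_boot.
Set Implicit Arguments. Unset Strict Implicit. Unset Printing Implicit Defensive.

(* Since parents always have strictly smaller
   rounds, fuel [round b].+1 suffices to explore the whole sub-DAG. *)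
Fixpoint dfs_fuel (B : Type) (parents : B -> seq B) (fuel : nat) (b : B) : seq B :=
  match fuel with
  | 0 => [:: b]
  | k.+1 => b :: flatten [seq dfs_fuel parents k p | p <- parents b]
  end.

Definition dfs (B : Type) (round : B -> nat) (parents : B -> seq B) (b : B) : seq B :=
  dfs_fuel parents (round b).+1 b.

Definition vote (V B : eqType) (author : B -> V) (round : B -> nat)
    (parents : B -> seq B) (b L : B) : bool :=
  (round L < round b) &&
  (ohead [seq x <- dfs round parents b |
            (author x == author L) && (round x == round L)] == Some L).

Definition certificate (f : nat) (V B : eqType) (author : B -> V)
    (round : B -> nat) (parents : B -> seq B) (c L : B) : bool :=
  (round c == round L + 3) &&
  (2 * f + 1 <= count (fun p => (round p == round L + 2) &&
                                vote author round parents p L)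
                      (undup (parents c))).

(* Main.v *)
Require Import Defs.
From mathcomp Require Import all_boot.
From mathcomp Require Import zify.

Lemma dfs_head (B : eqType) (par : B -> seq B) k b : b \in dfs_fuel par k b.
Proof. by case: k => [|k] /=; rewrite mem_head. Qed.

Lemma dfs2 (B : eqType) (par : B -> seq B) k y p q :
  p \in par y -> q \in par p -> q \in dfs_fuel par k.+2 y.
Proof.
move=> Hp Hq /=. rewrite in_cons; apply/orP; right.
apply/flatten_mapP; exists p => //=.
rewrite in_cons; apply/orP; right; apply/flatten_mapP; exists q => //.
exact: dfs_head.
Qed.

Lemma card_sum_in (T : finType) (A C : {set T}) :
  \sum_(a in A) (a \in C) = #|A :&: C|.
Proof.
rewrite -sum1_card.
rewrite [RHS](eq_bigl (fun a => (a \in A) && (a \in C))); last by move=> a; rewrite inE.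
rewrite big_mkcondr /=. apply: eq_bigr => a _; by case: (a \in C).
Qed.

Lemma card_hon (T : finType) (l : seq T) (H : {set T}) :
  size (undup l) <= #|[set a in l] :&: H| + #|~: H|.
Proof.
have cl : #|[set a in l]| = size (undup l).
  rewrite cardsE -(eq_card (mem_undup l)); apply/card_uniqP; exact: undup_uniq.
rewrite -cl -(cardsID H [set a in l]) leq_add2l.
apply: subset_leq_card; apply/subsetP => a; by rewrite !inE => /andP [].
Qed.

Lemma card_sum_pred (T : finType) (A : {set T}) (P : pred T) :
  \sum_(a in A) P a = #|[set a in A | P a]|.
Proof.
rewrite -sum1_card.
rewrite [RHS](eq_bigl (fun a => (a \in A) && P a)); last by move=> a; rewrite inE.
rewrite big_mkcondr /=. apply: eq_bigr => a _; by case: (P a).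
Qed.

Lemma ohead_all (T : eqType) (s : seq T) x :
  x \in s -> (forall y, y \in s -> y = x) -> ohead s == Some x.
Proof. case: s => [//|y s] _ H /=. by rewrite (H y (mem_head _ _)). Qed.

Theorem lemma15 (f : nat) (B : eqType)
    (author : B -> 'I_(3 * f + 1)) (round : B -> nat) (parents : B -> seq B)
    (honest : {set 'I_(3 * f + 1)}) :
  (* at most f Byzantine validators *)
  #|~: honest| <= f ->
  (* every honest validator creates exactly one block in every round *)
  (forall (v : 'I_(3 * f + 1)) (r : nat), v \in honest ->
     exists! b : B, author b = v /\ round b = r) ->
  (* parent references point to strictly earlier rounds *)
  (forall b p : B, p \in parents b -> round p < round b) ->
  (* every block of round r >= 1 has as parents at least 2f+1 blocks of
     round r-1 from distinct validators *)
  (forall b : B, 0 < round b ->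
     2 * f + 1 <= size (undup [seq author p | p <- parents b &
                                                round p == (round b).-1])) ->
  forall r : nat, exists b : B, round b = r /\
    exists cs : seq B, [/\ uniq cs, 2 * f + 1 <= size cs &
      all (fun c => certificate f author round parents c b) cs].
Proof.
move=> Hbyz Hhon Hpar Hcnt r.
set H := honest.
have Hb : #|~: H| <= f := Hbyz.
have uniqH : forall v rr x y, v \in H -> author x = v -> round x = rr ->
    author y = v -> round y = rr -> x = y.
  move=> v rr x y Hv ax rx ay ry. case: (Hhon v rr Hv) => z [_ Hz].
  by have := Hz x (conj ax rx); have := Hz y (conj ay ry); move=> <- <-.
have cardH : #|H| + #|~: H| = 3*f+1 by rewrite cardsC card_ord.
have [v0 Hv0] : exists v0, v0 \in H.
  apply/card_gt0P. lia.
have [b0 _] : exists b0 : B, True by case: (Hhon v0 0 Hv0) => z _; exists z.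
have pick : forall rr, exists g : 'I_(3*f+1) -> B, forall v, v \in H ->
    author (g v) = v /\ round (g v) = rr.
  move=> rr.
  have := @fin_all_exists _ (fun _ => B)
    (fun v (b : B) => v \in H -> author b = v /\ round b = rr).
  apply => v. case: (boolP (v \in H)) => vH; last by exists b0.
  by case: (Hhon v rr vH) => z [Hz _]; exists z.
case: (pick r) => g0 Hg0. case: (pick r.+1) => g1 Hg1.
case: (pick r.+3) => g3 Hg3.
pose S v := [set a in H | g0 a \in parents (g1 v)].
pose X a := [set v in H | a \in S v].
have hS : forall v, v \in H -> 2*f+1 <= #|S v| + #|~:H|.
  move=> v Hv. case: (Hg1 v Hv) => av rv.
  have := Hcnt (g1 v). rewrite rv /= => /(_ isT) Hl.
  set l := [seq author p | p <- parents (g1 v) & round p == r] in Hl.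
  have sub : [set a in l] :&: H \subset S v.
    apply/subsetP => a; rewrite !inE => /andP [al aH]. rewrite aH /=.
    case/mapP: al => p; rewrite mem_filter => /andP [rp pp] Ea; subst a.
    have -> : g0 (author p) = p => //.
    case: (Hg0 _ aH) => a1 a2.
    by apply: (uniqH (author p) r) => //; apply/eqP.
  have := @card_hon _ l H. have := subset_leq_card sub. move=> h1 h2.
  by apply: (leq_trans Hl (leq_trans h2 _)); rewrite leq_add2r.
have sumeq : \sum_(v in H) #|S v| = \sum_(a in H) #|X a|.
  have e1 : forall v, #|S v| = \sum_(a in H) (a \in S v).
    move=> v; rewrite card_sum_in (setIidPr _) //.
    by apply/subsetP => a; rewrite inE => /andP [].
  have e2 : forall a, #|X a| = \sum_(v in H) (a \in S v).
    move=> a; rewrite (@card_sum_pred _ H (fun v => a \in S v)); apply: eq_card => v.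
    by rewrite !inE.
  rewrite (eq_bigr _ (fun v _ => e1 v)) exchange_big /=.
  by apply: eq_bigr => a _; rewrite e2.
have lo : #|H| * (2*f+1 - #|~:H|) <= \sum_(v in H) #|S v|.
  rewrite -sum_nat_const. apply: leq_sum => v Hv. have := hS v Hv. lia.
case: (pickP [pred a in H | f < #|X a|]) => [a /andP [aH Xa] | none]; last first.
  exfalso.
  have : \sum_(a in H) #|X a| <= #|H| * f.
    rewrite -sum_nat_const; apply: leq_sum => a aH.
    by have := none a; rewrite /= aH /= => /negbT; rewrite -leqNgt.
  rewrite -sumeq => hi.
  have : #|H| * (f+1) <= #|H| * (2*f+1-#|~:H|).
    apply: leq_mul => //; lia.
  have : 0 < #|H| by lia.
  move: lo hi. nia.
case: (Hg0 a aH) => a0 r0.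
have hv : forall y, round y = r.+2 -> vote author round parents y (g0 a).
  move=> y ry.
  have := Hcnt y. rewrite ry => /(_ isT) Hl.
  set l := [seq author p | p <- parents y & round p == r.+1] in Hl.
  pose Y := [set v in l] :&: H.
  have hY : size (undup l) <= #|Y| + #|~: H| := @card_hon _ l H.
  have sYX : #|Y :|: X a| <= #|H|.
    apply: subset_leq_card; apply/subsetP => v; rewrite !inE.
    by case/orP => /andP [].
  have := cardsUI Y (X a). move=> hU.
  have [v] : exists v, v \in Y :&: X a.
    apply/card_gt0P. move: Hl hY sYX hU Xa cardH Hb. clearbody Y X l H.
    set n1 := #|Y|; set n2 := #|X a|; set n3 := #|Y :|: X a|; set n4 := #|Y :&: X a|; set nk := #|~: H|; set nh := #|H|. lia.
  rewrite !inE => /andP [/andP [vl vH] /andP [_ /andP [_ ga]]].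
  case/mapP: vl => p; rewrite mem_filter => /andP [rp pp] Ev; subst v.
  have ep : g1 (author p) = p.
    case: (Hg1 _ vH) => a1 a2.
    by apply: (uniqH (author p) r.+1) => //; apply/eqP.
  rewrite ep in ga.
  have gd : g0 a \in Defs.dfs round parents y by rewrite /Defs.dfs ry; exact: (@dfs2 _ parents _ _ _ _ pp ga).
  rewrite /vote r0 ry; apply/andP; split; first by lia.
  apply: ohead_all; first by rewrite mem_filter a0 r0 !eqxx gd.
  move=> x; rewrite mem_filter => /andP [/andP [/eqP ax /eqP rx] _].
  rewrite a0 in ax.
  by apply: (uniqH a r) => //; rewrite ?a0 ?r0.
have hc : forall c, round c = r.+3 -> certificate f author round parents c (g0 a).
  move=> c rc. rewrite /certificate rc r0.
  have -> : r + 3 = r.+3 by rewrite !addnS addn0.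
  have -> : r + 2 = r.+2 by rewrite !addnS addn0.
  rewrite eqxx /=.
  have := Hcnt c. rewrite rc => /(_ isT) /= Hl.
  rewrite (eq_count (a2 := fun p => round p == r.+2)); last first.
    move=> p /=; case: eqP => // rp /=; exact: hv.
  apply: (leq_trans Hl).
  rewrite -size_filter filter_undup.
  apply: (@leq_trans (size [seq author p | p <- undup [seq p <- parents c | round p == r.+2]])); last by rewrite size_map.
  apply: uniq_leq_size; first exact: undup_uniq.
  move=> v; rewrite mem_undup => /mapP [p pin ->]; apply: map_f; by rewrite mem_undup.
exists (g0 a); split => //.
exists [seq g3 v | v <- enum H]; split.
- rewrite map_inj_in_uniq ?enum_uniq // => v w; rewrite !mem_enum => vH wH E.
  by rewrite -(proj1 (Hg3 v vH)) E (proj1 (Hg3 w wH)).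
- have hh : 2 * f + 1 <= #|H| by lia.
  by rewrite size_map -cardE.
- apply/allP => c /mapP [v]; rewrite mem_enum => vH ->.
  apply: hc; exact: (proj2 (Hg3 v vH)).
Qed.
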